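(* Let $J_3$ be the graph with vertex set $\{a,b,c,d,e,f,g,h,i,j,k\}$ whose edges are: $ab$; $ac,ad,ae,af,ag$ and $bc,bd,be,bf,bg$; $cd,de,ef,fg$; $ha,hd,he$; $ia,ie,if$; $jb,jd,je$; $kb,ke,kf$. Let $H$ be a subgraph of $J_3$ with maximum degree at most three that contains no edge incident with $a$ or $b$. Then $J_3-E(H)$ contains a copy of $K_4$, or a subgraph isomorphic to $J_1$ or to $J_2$ via an isomorphism mapping the vertices $a,b$ of $J_1$ (resp. $J_2$) to the vertices $a,b$ of $J_3$ respectively.
   Context: $J_1$ is the graph with vertex set $\{a,b,c,d,e\}$ and edge set $\{ab,ac,bc,ae,be,cd,de,ad\}$; $J_2$ is the graph with the same vertex set and edge set $\{ab,ac,bc,ae,be,cd,de,bd\}$. (In the paper, the edge $ab$ is called the handle, and the conclusion is phrased as ''a subgraph isomorphic to $J_1$ or $J_2$ with handle $ab$''.) *)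

(* Defs.v *)
From mathcomp Require Import all_boot.
Set Implicit Arguments. Unset Strict Implicit. Unset Printing Implicit Defensive.

Definition adj_of {n : nat} (es : seq (nat * nat)) : rel 'I_n :=
  fun x y => ((nat_of_ord x, nat_of_ord y) \in es) || ((nat_of_ord y, nat_of_ord x) \in es).

(* J1, J2 on vertices 'I_5 : a=0, b=1, c=2, d=3, e=4. *)
Definition J1_edges : seq (nat * nat) :=
  [:: (0,1); (0,2); (1,2); (0,4); (1,4); (2,3); (3,4); (0,3)].          (* ab ac bc ae be cd de ad *)
Definition J2_edges : seq (nat * nat) :=
  [:: (0,1); (0,2); (1,2); (0,4); (1,4); (2,3); (3,4); (1,3)].          (* ab ac bc ae be cd de bd *)
Definition J1 : rel 'I_5 := @adj_of 5 J1_edges.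
Definition J2 : rel 'I_5 := @adj_of 5 J2_edges.

(* J3 on vertices 'I_11 : a=0,b=1,c=2,d=3,e=4,f=5,g=6,h=7,i=8,j=9,k=10. *)
Definition J3_edges : seq (nat * nat) :=
  [:: (0,1);
      (0,2); (0,3); (0,4); (0,5); (0,6);
      (1,2); (1,3); (1,4); (1,5); (1,6);
      (2,3); (3,4); (4,5); (5,6);
      (7,0); (7,3); (7,4);
      (8,0); (8,4); (8,5);
      (9,1); (9,3); (9,4);
      (10,1); (10,4); (10,5)].
Definition J3 : rel 'I_11 := @adj_of 11 J3_edges.

Definition has_K4 (T : finType) (G : rel T) : Prop :=
  exists S : {set T}, #|S| = 4 /\ {in S &, forall x y, x != y -> G x y}.

Definition has_copy_fixing (T U : finType) (F : rel U) (G : rel T) (u v : U) (u' v' : T) : Prop :=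
  exists phi : U -> T, [/\ injective phi, phi u = u', phi v = v' &
                           forall x y, F x y -> G (phi x) (phi y)].

(* Main.v *)
Require Import Defs.
From mathcomp Require Import all_boot.

Lemma J3i (i j : nat) : i < 11 -> j < 11 ->
  J3 (inord i) (inord j) = ((i, j) \in J3_edges) || ((j, i) \in J3_edges).
Proof. by move=> hi hj; rewrite /J3 /adj_of !inordK. Qed.

Lemma deg4 (H : rel 'I_11) : (forall x : 'I_11, #|[set y | H x y]| <= 3) ->
  forall x (s : seq 'I_11), uniq s -> size s = 4 -> all (H x) s -> False.
Proof.
move=> Hd x s us ss al.
have: size s <= #|[set y | H x y]|.
  rewrite cardE; apply: uniq_leq_size => // y ys.
  by rewrite mem_enum inE; exact: (allP al).
by rewrite ss => /leq_trans /(_ (Hd x)).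
Qed.

Lemma K4P (G : rel 'I_11) (x1 x2 x3 x4 : 'I_11) : uniq [:: x1; x2; x3; x4] ->
  all (fun p => G p.1 p.2 && G p.2 p.1)
    [:: (x1, x2); (x1, x3); (x1, x4); (x2, x3); (x2, x4); (x3, x4)] -> has_K4 G.
Proof.
move=> us hall; exists [set x in [:: x1; x2; x3; x4]]; split.
  by rewrite cardsE; apply/card_uniqP.
move: hall => /= /andP[/andP[h12 h21] /andP[/andP[h13 h31]
  /andP[/andP[h14 h41] /andP[/andP[h23 h32] /andP[/andP[h24 h42] /andP[/andP[h34 h43] _]]]]]].
by move=> x y; rewrite !inE => /or4P[]/eqP-> /or4P[]/eqP->; rewrite ?eqxx.
Qed.

Lemma copyP (es : seq (nat * nat)) (G : rel 'I_11) (s : seq nat) :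
  size s = 5 -> all (fun k => k < 11) s -> uniq s ->
  all (fun p => G (inord (nth 0 s p.1)) (inord (nth 0 s p.2))
             && G (inord (nth 0 s p.2)) (inord (nth 0 s p.1))) es ->
  has_copy_fixing (@adj_of 5 es) G (inord 0) (inord 1)
    (inord (nth 0 s 0)) (inord (nth 0 s 1)).
Proof.
move=> ss hs us hall.
have hn : forall x : 'I_5, nth 0 s x < 11.
  by move=> x; apply: (allP hs); rewrite mem_nth // ss.
exists (fun x : 'I_5 => (inord (nth 0 s x) : 'I_11)); split.
- move=> x y /(congr1 (@nat_of_ord 11)); rewrite !inordK // => /eqP.
  by rewrite nth_uniq ?ss // => /eqP /val_inj.
- by rewrite /= inordK.
- by rewrite /= inordK.
- move=> x y; rewrite /adj_of => /orP[] /(allP hall) /andP[] //.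
Qed.

Theorem lemma3 (H : rel 'I_11) :
  (* H is a (simple) subgraph of J3, given by its edge relation *)
  symmetric H ->
  subrel H J3 ->
  (* maximum degree of H at most three *)
  (forall x : 'I_11, #|[set y | H x y]| <= 3) ->
  (* no edge of H is incident with a (= 0) or b (= 1) *)
  (forall y : 'I_11, ~~ H (inord 0) y /\ ~~ H (inord 1) y) ->
  let G := fun x y : 'I_11 => J3 x y && ~~ H x y in
  has_K4 G \/
  has_copy_fixing J1 G (inord 0) (inord 1) (inord 0) (inord 1) \/
  has_copy_fixing J2 G (inord 0) (inord 1) (inord 0) (inord 1).
Proof.
move=> Hsym Hsub Hdeg Hab G.
have ha : forall y, H (inord 0) y = false by move=> y; apply/negbTE; case: (Hab y).
have hb : forall y, H (inord 1) y = false by move=> y; apply/negbTE; case: (Hab y).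
have ha' : forall y, H y (inord 0) = false by move=> y; rewrite Hsym ha.
have hb' : forall y, H y (inord 1) = false by move=> y; rewrite Hsym hb.
have hs : forall i j, H (inord i) (inord j) = H (inord j) (inord i).
  by move=> i j; rewrite Hsym.
have un : forall s : seq nat, all (fun k => k < 11) s -> uniq s ->
   uniq [seq (inord k : 'I_11) | k <- s].
  move=> s al us; rewrite map_inj_in_uniq // => i j /(allP al) hi /(allP al) hj.
  by move/(congr1 (@nat_of_ord 11)); rewrite !inordK.
rewrite /G; clear G.
have Hcdr : H (inord 3) (inord 2) = H (inord 2) (inord 3) by rewrite hs.
case Hcd: (H (inord 2) (inord 3)); rewrite Hcd in Hcdr.
have Hfgr : H (inord 6) (inord 5) = H (inord 5) (inord 6) by rewrite hs.
case Hfg: (H (inord 5) (inord 6)); rewrite Hfg in Hfgr.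
have Hder : H (inord 4) (inord 3) = H (inord 3) (inord 4) by rewrite hs.
case Hde: (H (inord 3) (inord 4)); rewrite Hde in Hder.
have Hefr : H (inord 5) (inord 4) = H (inord 4) (inord 5) by rewrite hs.
case Hef: (H (inord 4) (inord 5)); rewrite Hef in Hefr.
have Hher : H (inord 7) (inord 4) = H (inord 4) (inord 7) by rewrite hs.
case Hhe: (H (inord 4) (inord 7)); rewrite Hhe in Hher.
have Hier : H (inord 8) (inord 4) = H (inord 4) (inord 8) by rewrite hs.
case Hie: (H (inord 4) (inord 8)); rewrite Hie in Hier.
exfalso; apply: (@deg4 H Hdeg (inord 4) ([seq inord k | k <- [:: 3;5;7;8]])) => //.
  by apply: un.
  rewrite /= ?J3i //= ?ha ?ha' ?hb ?hb' ?Hcd ?Hcdr ?Hfg ?Hfgr ?Hde ?Hder ?Hef ?Hefr ?Hhe ?Hher ?Hie ?Hier //.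
have Hker : H (inord 10) (inord 4) = H (inord 4) (inord 10) by rewrite hs.
case Hke: (H (inord 4) (inord 10)); rewrite Hke in Hker.
exfalso; apply: (@deg4 H Hdeg (inord 4) ([seq inord k | k <- [:: 3;5;7;10]])) => //.
  by apply: un.
  rewrite /= ?J3i //= ?ha ?ha' ?hb ?hb' ?Hcd ?Hcdr ?Hfg ?Hfgr ?Hde ?Hder ?Hef ?Hefr ?Hhe ?Hher ?Hie ?Hier ?Hke ?Hker //.
have Hifr : H (inord 8) (inord 5) = H (inord 5) (inord 8) by rewrite hs.
case Hif: (H (inord 5) (inord 8)); rewrite Hif in Hifr.
have Hkfr : H (inord 10) (inord 5) = H (inord 5) (inord 10) by rewrite hs.
case Hkf: (H (inord 5) (inord 10)); rewrite Hkf in Hkfr.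
exfalso; apply: (@deg4 H Hdeg (inord 5) ([seq inord k | k <- [:: 4;6;8;10]])) => //.
  by apply: un.
  rewrite /= ?J3i //= ?ha ?ha' ?hb ?hb' ?Hcd ?Hcdr ?Hfg ?Hfgr ?Hde ?Hder ?Hef ?Hefr ?Hhe ?Hher ?Hie ?Hier ?Hke ?Hker ?Hif ?Hifr ?Hkf ?Hkfr //.
right; right; apply: (@copyP _ _ [:: 0;1;4;10;5]) => //.
  rewrite /= ?J3i //= ?ha ?ha' ?hb ?hb' ?Hcd ?Hcdr ?Hfg ?Hfgr ?Hde ?Hder ?Hef ?Hefr ?Hhe ?Hher ?Hie ?Hier ?Hke ?Hker ?Hif ?Hifr ?Hkf ?Hkfr //.
right; left; apply: (@copyP _ _ [:: 0;1;4;8;5]) => //.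
  rewrite /= ?J3i //= ?ha ?ha' ?hb ?hb' ?Hcd ?Hcdr ?Hfg ?Hfgr ?Hde ?Hder ?Hef ?Hefr ?Hhe ?Hher ?Hie ?Hier ?Hke ?Hker ?Hif ?Hifr //.
have Hjer : H (inord 9) (inord 4) = H (inord 4) (inord 9) by rewrite hs.
case Hje: (H (inord 4) (inord 9)); rewrite Hje in Hjer.
have Hier : H (inord 8) (inord 4) = H (inord 4) (inord 8) by rewrite hs.
case Hie: (H (inord 4) (inord 8)); rewrite Hie in Hier.
exfalso; apply: (@deg4 H Hdeg (inord 4) ([seq inord k | k <- [:: 3;5;9;8]])) => //.
  by apply: un.
  rewrite /= ?J3i //= ?ha ?ha' ?hb ?hb' ?Hcd ?Hcdr ?Hfg ?Hfgr ?Hde ?Hder ?Hef ?Hefr ?Hhe ?Hher ?Hje ?Hjer ?Hie ?Hier //.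
have Hker : H (inord 10) (inord 4) = H (inord 4) (inord 10) by rewrite hs.
case Hke: (H (inord 4) (inord 10)); rewrite Hke in Hker.
exfalso; apply: (@deg4 H Hdeg (inord 4) ([seq inord k | k <- [:: 3;5;9;10]])) => //.
  by apply: un.
  rewrite /= ?J3i //= ?ha ?ha' ?hb ?hb' ?Hcd ?Hcdr ?Hfg ?Hfgr ?Hde ?Hder ?Hef ?Hefr ?Hhe ?Hher ?Hje ?Hjer ?Hie ?Hier ?Hke ?Hker //.
have Hifr : H (inord 8) (inord 5) = H (inord 5) (inord 8) by rewrite hs.
case Hif: (H (inord 5) (inord 8)); rewrite Hif in Hifr.
have Hkfr : H (inord 10) (inord 5) = H (inord 5) (inord 10) by rewrite hs.
case Hkf: (H (inord 5) (inord 10)); rewrite Hkf in Hkfr.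
exfalso; apply: (@deg4 H Hdeg (inord 5) ([seq inord k | k <- [:: 4;6;8;10]])) => //.
  by apply: un.
  rewrite /= ?J3i //= ?ha ?ha' ?hb ?hb' ?Hcd ?Hcdr ?Hfg ?Hfgr ?Hde ?Hder ?Hef ?Hefr ?Hhe ?Hher ?Hje ?Hjer ?Hie ?Hier ?Hke ?Hker ?Hif ?Hifr ?Hkf ?Hkfr //.
right; right; apply: (@copyP _ _ [:: 0;1;4;10;5]) => //.
  rewrite /= ?J3i //= ?ha ?ha' ?hb ?hb' ?Hcd ?Hcdr ?Hfg ?Hfgr ?Hde ?Hder ?Hef ?Hefr ?Hhe ?Hher ?Hje ?Hjer ?Hie ?Hier ?Hke ?Hker ?Hif ?Hifr ?Hkf ?Hkfr //.
right; left; apply: (@copyP _ _ [:: 0;1;4;8;5]) => //.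
  rewrite /= ?J3i //= ?ha ?ha' ?hb ?hb' ?Hcd ?Hcdr ?Hfg ?Hfgr ?Hde ?Hder ?Hef ?Hefr ?Hhe ?Hher ?Hje ?Hjer ?Hie ?Hier ?Hke ?Hker ?Hif ?Hifr //.
have Hhdr : H (inord 7) (inord 3) = H (inord 3) (inord 7) by rewrite hs.
case Hhd: (H (inord 3) (inord 7)); rewrite Hhd in Hhdr.
have Hjdr : H (inord 9) (inord 3) = H (inord 3) (inord 9) by rewrite hs.
case Hjd: (H (inord 3) (inord 9)); rewrite Hjd in Hjdr.
exfalso; apply: (@deg4 H Hdeg (inord 3) ([seq inord k | k <- [:: 2;4;7;9]])) => //.
  by apply: un.
  rewrite /= ?J3i //= ?ha ?ha' ?hb ?hb' ?Hcd ?Hcdr ?Hfg ?Hfgr ?Hde ?Hder ?Hef ?Hefr ?Hhe ?Hher ?Hje ?Hjer ?Hhd ?Hhdr ?Hjd ?Hjdr //.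
right; right; apply: (@copyP _ _ [:: 0;1;3;9;4]) => //.
  rewrite /= ?J3i //= ?ha ?ha' ?hb ?hb' ?Hcd ?Hcdr ?Hfg ?Hfgr ?Hde ?Hder ?Hef ?Hefr ?Hhe ?Hher ?Hje ?Hjer ?Hhd ?Hhdr ?Hjd ?Hjdr //.
right; left; apply: (@copyP _ _ [:: 0;1;3;7;4]) => //.
  rewrite /= ?J3i //= ?ha ?ha' ?hb ?hb' ?Hcd ?Hcdr ?Hfg ?Hfgr ?Hde ?Hder ?Hef ?Hefr ?Hhe ?Hher ?Hje ?Hjer ?Hhd ?Hhdr //.
left; apply: (@K4P _ (inord 0) (inord 1) (inord 4) (inord 5)).
  by apply: (un [:: 0;1;4;5]).
  rewrite /= ?J3i //= ?ha ?ha' ?hb ?hb' ?Hcd ?Hcdr ?Hfg ?Hfgr ?Hde ?Hder ?Hef ?Hefr //.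
left; apply: (@K4P _ (inord 0) (inord 1) (inord 3) (inord 4)).
  by apply: (un [:: 0;1;3;4]).
  rewrite /= ?J3i //= ?ha ?ha' ?hb ?hb' ?Hcd ?Hcdr ?Hfg ?Hfgr ?Hde ?Hder //.
left; apply: (@K4P _ (inord 0) (inord 1) (inord 5) (inord 6)).
  by apply: (un [:: 0;1;5;6]).
  rewrite /= ?J3i //= ?ha ?ha' ?hb ?hb' ?Hcd ?Hcdr ?Hfg ?Hfgr //.
left; apply: (@K4P _ (inord 0) (inord 1) (inord 2) (inord 3)).
  by apply: (un [:: 0;1;2;3]).
  rewrite /= ?J3i //= ?ha ?ha' ?hb ?hb' ?Hcd ?Hcdr //.
Qed.
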